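(* Let $a,b$ be real numbers with $0<a<1$, $0\le b<1$, and suppose $2^{e_0}a$ and $2^{e_0}b$ are integers for some $e_0$. Put $k_{\mathrm r}=-\frac{1}{1-a}$ and $c=\frac{1}{2-a}$ (the unique fixed point of the continuous generalized Tent map). Then there is $E$ such that for every integer $e\ge \max(E,e_0)$ the following holds, where $T_e$ is the generalized Tent map defined below and $x'=\max\{x\in\{0,\dots,2^e\} : x\ge 2^e a,\ T_e(x)\ge 2^e a\}$: for every integer $x$ with $2^e a\le x\le 2^e c+\frac{k_{\mathrm r}}{k_{\mathrm r}^2-1}$ one has $T_e^2(x)<x$, and for every integer $x$ with $2^e c+\frac{1}{k_{\mathrm r}^2-1}<x\le x'$ one has $T_e^2(x)>x$. (Here $T_e^2=T_e\circ T_e$.)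
   Context: The generalized Tent map in the fixed-point domain of precision $e$ (with floor quantization) is the map $T_e:\{0,1,\dots,2^e\}\to\mathbb{Z}$ given by $$T_e(x)=\begin{cases}\left\lfloor 2^e b+\frac{1-b}{a}\,x\right\rfloor & \text{if } 0\le x<2^e a,\\[2pt] \left\lfloor \frac{2^e-x}{1-a}\right\rfloor & \text{if } 2^e a\le x\le 2^e,\end{cases}$$ where $a,b$ are parameters with $2^e a,2^e b\in\{0,1,\dots,2^e\}$. *)

(* Defs.v *)
From Stdlib Require Import Reals ZArith.
Open Scope R_scope.

(* floor on R: Stdlib's Int_part r = up r - 1 is the floor of r. *)
Definition floorR (r : R) : Z := Int_part r.

(* Generalized Tent map in the fixed-point domain of precision e,
   floor quantization; the formula is given for every integer x
   (it is only used on x in {0,...,2^e}). *)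
Definition Tent (a b : R) (e : nat) (x : Z) : Z :=
  if Rlt_dec (IZR x) (2 ^ e * a)
  then floorR (2 ^ e * b + (1 - b) / a * IZR x)
  else floorR ((2 ^ e - IZR x) / (1 - a)).

Definition is_xprime (a b : R) (e : nat) (xp : Z) : Prop :=
  (0 <= IZR xp <= 2 ^ e) /\ 2 ^ e * a <= IZR xp /\
  2 ^ e * a <= IZR (Tent a b e xp) /\
  (forall y : Z, 0 <= IZR y <= 2 ^ e -> 2 ^ e * a <= IZR y ->
     2 ^ e * a <= IZR (Tent a b e y) -> (y <= xp)%Z).

Definition k_r (a : R) : R := - (1 / (1 - a)).
Definition c_fix (a : R) : R := 1 / (2 - a).

(* Main.v *)
Require Import Defs.
From Stdlib Require Import Reals ZArith Lra Lia Psatz.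
Open Scope R_scope.

Lemma pow2_ge (n : nat) : INR n + 1 <= 2 ^ n.
Proof.
  induction n as [|n IH]; [simpl; lra|]. rewrite S_INR. simpl.
  assert (1 <= 2 ^ n) by (apply pow_R1_Rle; lra). lra.
Qed.

Lemma tent_right a b e x : 2 ^ e * a <= IZR x ->
  Tent a b e x = floorR ((2 ^ e - IZR x) / (1 - a)).
Proof.
  intros H. unfold Tent. destruct (Rlt_dec (IZR x) (2 ^ e * a)); [lra|reflexivity].
Qed.

Lemma floor_spec r : IZR (floorR r) <= r /\ IZR (floorR r) > r - 1.
Proof. unfold floorR. destruct (base_Int_part r). lra. Qed.

Lemma floor_mono r s : r <= s -> (floorR r <= floorR s)%Z.
Proof.
  intros H. destruct (floor_spec r), (floor_spec s).
  assert (IZR (floorR r) < IZR (floorR s + 1)) by (rewrite plus_IZR; lra).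
  apply lt_IZR in H4. lia.
Qed.

Theorem mainTheorem2 (a b : R) (e0 : nat) :
  0 < a < 1 -> 0 <= b < 1 ->
  (exists z : Z, 2 ^ e0 * a = IZR z) ->
  (exists z : Z, 2 ^ e0 * b = IZR z) ->
  exists E : nat, forall e : nat, (Nat.max E e0 <= e)%nat ->
    forall xp : Z, is_xprime a b e xp ->
      (forall x : Z,
         2 ^ e * a <= IZR x <= 2 ^ e * c_fix a + k_r a / (k_r a ^ 2 - 1) ->
         (Tent a b e (Tent a b e x) < x)%Z) /\
      (forall x : Z,
         2 ^ e * c_fix a + 1 / (k_r a ^ 2 - 1) < IZR x -> (x <= xp)%Z ->
         (Tent a b e (Tent a b e x) > x)%Z).
Proof.
  intros Ha Hb _ _.
  assert (Hca : 0 < 1 / (2 - a) - a).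
  { assert (1 / (2 - a) - a = (1 - a) ^ 2 / (2 - a)) by (field; lra).
    rewrite H. apply Rdiv_lt_0_compat; [nra|lra]. }
  set (d := 1 / (2 - a) - a) in *.
  destruct (archimed (1 / d)) as [Hup _].
  exists (Z.to_nat (up (1 / d))).
  intros e He xp Hxp.
  assert (HE : 1 <= 2 ^ e * d).
  { assert (Hn : INR (Z.to_nat (up (1/d))) + 1 <= 2 ^ e).
    { eapply Rle_trans; [apply pow2_ge|]. apply Rle_pow; [lra|lia]. }
    assert (IZR (up (1/d)) <= INR (Z.to_nat (up (1/d)))).
    { destruct (Z_le_gt_dec 0 (up (1/d))).
      - rewrite INR_IZR_INZ, Z2Nat.id by lia; lra.
      - apply Rle_trans with 0; [apply IZR_le; lia| apply pos_INR]. }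
    assert (1 / d * d = 1) by (field; lra).
    assert (0 < 2 ^ e) by (apply pow_lt; lra).
    nra. }
  assert (HN : 0 < 2 ^ e) by (apply pow_lt; lra).
  set (N := 2 ^ e) in *.
  assert (Hk1 : k_r a / (k_r a ^ 2 - 1) = - ((1 - a) / (a * (2 - a)))).
  { unfold k_r. field. split; [nra|]. split; [lra|]. nra. }
  assert (Hk2 : 1 / (k_r a ^ 2 - 1) = (1 - a) ^ 2 / (a * (2 - a))).
  { unfold k_r. field. split; [nra|]. split; [lra|]. nra. }
  assert (Hc : N * c_fix a = N / (2 - a)) by (unfold c_fix; field; lra).
  rewrite Hk1, Hk2, Hc.
  assert (Ha2 : 0 < a * (2 - a)) by nra.
  split.
  - intros x [Hx1 Hx2].
    rewrite (tent_right a b e x Hx1); fold N.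
    set (w := (N - IZR x) / (1 - a)).
    assert (Hw : w * (1 - a) = N - IZR x) by (unfold w; field; lra).
    set (y := floorR w). destruct (floor_spec w) as [Hy1 Hy2]. fold y in Hy1, Hy2.
    assert (Hxd : IZR x * (a * (2 - a)) <= N * a - (1 - a)).
    { assert (Hq : (N / (2 - a) + - ((1 - a) / (a * (2 - a)))) * (a * (2 - a))
                   = N * a - (1 - a)) by (field; lra).
      rewrite <- Hq. apply Rmult_le_compat_r; lra. }
    assert (HwNc : w > N / (2 - a)).
    { assert (IZR x < N / (2 - a)).
      { assert (0 < (1 - a) / (a * (2 - a))) by (apply Rdiv_lt_0_compat; lra). lra. }
      assert (N / (2 - a) * (1 - a) = N - N / (2 - a)) by (field; lra).
      nra. }
    assert (HdN : N * d = N / (2 - a) - N * a) by (unfold d; field; lra).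
    assert (Hy : N * a <= IZR y) by lra.
    rewrite (tent_right a b e y Hy); fold N.
    set (z := (N - IZR y) / (1 - a)).
    assert (Hz : z * (1 - a) = N - IZR y) by (unfold z; field; lra).
    destruct (floor_spec z) as [Hz1 _].
    apply lt_IZR. apply Rle_lt_trans with z; [exact Hz1|].
    assert (H1 : (N - w + 1) * (1 - a) <= IZR x * (1 - a) * (1 - a)).
    { assert ((N - w + 1) * (1 - a) = (N + 1) * (1 - a) - (N - IZR x)) by nra.
      nra. }
    assert (H2 : N - w + 1 <= IZR x * (1 - a)).
    { apply Rmult_le_reg_r with (1 - a); lra. }
    assert (H3 : z * (1 - a) < IZR x * (1 - a)) by lra.
    apply Rmult_lt_reg_r with (1 - a); lra.
  - intros x Hx1 Hx2.
    assert (HNc : N * a < N / (2 - a)) by (assert (N * d > 0) by nra; unfold d in *; nra).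
    assert (Hpos : 0 < (1 - a) ^ 2 / (a * (2 - a))) by (apply Rdiv_lt_0_compat; nra).
    assert (HxA : N * a <= IZR x) by lra.
    rewrite (tent_right a b e x HxA); fold N.
    destruct Hxp as [_ [HxpA [HTxp _]]].
    rewrite (tent_right a b e xp HxpA) in HTxp; fold N in HTxp.
    set (w := (N - IZR x) / (1 - a)).
    assert (Hw : w * (1 - a) = N - IZR x) by (unfold w; field; lra).
    set (y := floorR w). destruct (floor_spec w) as [Hy1 Hy2]. fold y in Hy1, Hy2.
    assert (Hy : N * a <= IZR y).
    { eapply Rle_trans; [exact HTxp|]. apply IZR_le.
      apply floor_mono.
      assert (IZR x <= IZR xp) by (apply IZR_le; exact Hx2).
      apply Rmult_le_compat_r; [apply Rlt_le, Rinv_0_lt_compat; lra| lra]. }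
    rewrite (tent_right a b e y Hy); fold N.
    set (z := (N - IZR y) / (1 - a)).
    assert (Hz : z * (1 - a) = N - IZR y) by (unfold z; field; lra).
    destruct (floor_spec z) as [_ Hz2].
    assert (Hxd : IZR x * (a * (2 - a)) > N * a + (1 - a) ^ 2).
    { assert (Hq : (N / (2 - a) + (1 - a) ^ 2 / (a * (2 - a))) * (a * (2 - a))
                   = N * a + (1 - a) ^ 2) by (field; lra).
      rewrite <- Hq. apply Rmult_lt_compat_r; lra. }
    apply Z.lt_gt, lt_IZR. apply Rle_lt_trans with (z - 1); [|lra].
    assert (H1 : (N - w) * (1 - a) >= (IZR x + 1) * (1 - a) * (1 - a)).
    { assert ((N - w) * (1 - a) = N * (1 - a) - (N - IZR x)) by nra.
      nra. }
    assert (H2 : N - w >= (IZR x + 1) * (1 - a)).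
    { apply Rle_ge, Rmult_le_reg_r with (1 - a); lra. }
    assert (H3 : z * (1 - a) >= (IZR x + 1) * (1 - a)) by lra.
    assert (IZR x + 1 <= z) by (apply Rmult_le_reg_r with (1 - a); lra).
    lra.
Qed.
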